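(* Let $l_1,l_2,l_3$ be positive integers with $l_1=\min\{l_1,l_2,l_3\}$, $l_2\ge 2$, $l_3\ge 2$, let $G=\Theta(l_1,l_2,l_3)$, and let $L$ be an $m$-assignment for $G$ with $m\ge 3$. Suppose $q$ and $s$ are adjacent vertices of $G$, $x\in L(q)$, $y\in L(s)$, and $x\ne y$. Then there are at least $(m-1)^{l_1+l_2+l_3-5}(m-2)^2$ proper $L$-colorings of $G$ that color $q$ with $x$ and $s$ with $y$.
   Context: For positive integers $l_1,l_2,l_3$, the theta graph $\Theta(l_1,l_2,l_3)$ consists of two end vertices joined by three internally disjoint paths of lengths (numbers of edges) $l_1,l_2,l_3$. An $m$-assignment $L$ for a graph $G$ assigns to each vertex $v$ a set $L(v)$ of exactly $m$ colors; a proper $L$-coloring is a proper vertex coloring $f$ of $G$ with $f(v)\in L(v)$ for every vertex $v$. *)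

(* Defs.v *)
From mathcomp Require Import all_boot.
Set Implicit Arguments. Unset Strict Implicit. Unset Printing Implicit Defensive.

(* Vertex 0 and vertex 1 are the two end vertices.  The internal vertices of
   path k (k = 1,2,3) are consecutive numbers starting at offset o_k:
     o_1 = 2, o_2 = 2 + (l1-1), o_3 = 2 + (l1-1) + (l2-1).
   Path k is the vertex sequence 0, o_k, o_k+1, ..., o_k + l_k - 2, 1,
   which has l_k edges. *)

Definition theta_nv (l1 l2 l3 : nat) : nat := (l1 + l2 + l3).-1.

Definition theta_path (o l : nat) : seq nat := 0 :: rcons (iota o l.-1) 1.

Definition theta_paths (l1 l2 l3 : nat) : seq (seq nat) :=
  [:: theta_path 2 l1;
      theta_path (2 + l1.-1) l2;
      theta_path (2 + l1.-1 + l2.-1) l3].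

Definition path_edges (s : seq nat) : seq (nat * nat) := zip s (behead s).

Definition theta_adj_nat (l1 l2 l3 : nat) (x y : nat) : bool :=
  has (fun p => ((x, y) \in path_edges p) || ((y, x) \in path_edges p))
      (theta_paths l1 l2 l3).

Definition theta_adj (l1 l2 l3 : nat) : rel 'I_(theta_nv l1 l2 l3) :=
  fun x y => theta_adj_nat l1 l2 l3 (val x) (val y).

Definition proper_L_coloring (V C : finType) (e : rel V) (L : V -> {set C})
  (f : {ffun V -> C}) : bool :=
  [forall v, f v \in L v] && [forall u, forall v, e u v ==> (f u != f v)].
Arguments theta_adj {l1 l2 l3}.

(* Main.v *)
Require Import Defs.
From mathcomp Require Import all_boot.
From mathcomp Require Import zify.
Set Implicit Arguments. Unset Strict Implicit. Unset Printing Implicit Defensive.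

Section Greedy.
Variables (V C : finType) (e : rel V) (L : V -> {set C}) (m : nat).
Hypothesis HL : forall v, #|L v| = m.
Hypothesis esymm : forall u v, e u v = e v u.
Hypothesis eirr : forall v, ~~ e v v.
Variables (q s : V) (x y c0 : C).

Definition okS (S : {set V}) (f : {ffun V -> C}) : bool :=
  [&& [forall v, (v \in S) ==> (f v \in L v)],
      [forall u, forall v, [&& u \in S, v \in S & e u v] ==> (f u != f v)],
      [forall v, (v \notin S) ==> (f v == c0)], f q == x & f s == y].
Definition AS S := [set f | okS S f].

Lemma step (S : {set V}) v : q \in S -> s \in S -> v \notin S ->
  #|AS S| * (m - #|[set u in S | e u v]|) <= #|AS (v |: S)|.
Proof.
move=> qS sS vS.
set N := [set u in S | e u v].
set g := fun h : {ffun V -> C} => [ffun w => if w == v then c0 else h w].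
have gA : forall h, h \in AS (v |: S) -> g h \in AS S.
  move=> h; rewrite !inE => /and5P[/forallP h1 /forallP h2 /forallP h3 hq hs].
  apply/and5P; split.
  - apply/forallP=> w; apply/implyP=> wS; rewrite ffunE.
    have -> : (w == v) = false by apply/negbTE; apply: contraNneq vS => <-.
    by have := h1 w; rewrite inE wS orbT.
  - apply/forallP=> u; apply/forallP=> w; apply/implyP=> /and3P[uS wS euw].
    rewrite !ffunE.
    have -> : (w == v) = false by apply/negbTE; apply: contraNneq vS => <-.
    have -> : (u == v) = false by apply/negbTE; apply: contraNneq vS => <-.
    by have := h2 u => /forallP/(_ w); rewrite !inE uS wS euw !orbT.
  - apply/forallP=> w; apply/implyP=> wS; rewrite ffunE.
    case: ifP => [//|/negbT wv].
    by have := h3 w; rewrite !inE (negbTE wS) orbF (negbTE wv).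
  - rewrite ffunE; have -> : (q == v) = false by apply/negbTE; apply: contraNneq vS => <-.
    by [].
  - rewrite ffunE; have -> : (s == v) = false by apply/negbTE; apply: contraNneq vS => <-.
    by [].
rewrite -[#|AS (v |: S)|]sum1_card (partition_big g (mem (AS S))) //=.
rewrite -sum_nat_const; apply: leq_sum => f fA.
rewrite sum1dep_card.
set upd := fun c : C => [ffun w => if w == v then c else f w].
have updI : injective upd.
  by move=> c1 c2 /(congr1 (fun h : {ffun V -> C} => h v)); rewrite !ffunE eqxx.
move: (fA); rewrite inE => /and5P[/forallP h1 /forallP h2 /forallP h3 hq hs].
have fv : f v = c0 by apply/eqP; have := h3 v; rewrite vS.
apply: (@leq_trans #|L v :\: [set f u | u in N]|).
  rewrite cardsD HL leq_sub2l // (leq_trans (subset_leq_card (subsetIr _ _))) //.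
  exact: leq_imset_card.
rewrite -(card_imset _ updI); apply: subset_leq_card.
apply/subsetP=> h /imsetP[c] /setDP[cL cN] ->; rewrite inE.
apply/andP; split; last first.
  apply/eqP/ffunP=> w; rewrite !ffunE; case: eqP => // ->; by rewrite fv.
rewrite inE; apply/and5P; split.
- apply/forallP=> w; apply/implyP; rewrite !inE ffunE; case: eqP => [-> //|_ /= wS].
  by have := h1 w; rewrite wS.
- apply/forallP=> u; apply/forallP=> w; apply/implyP; rewrite !inE !ffunE.
  case: (eqVneq u v) => [->|uv]; case: (eqVneq w v) => [->|wv] /=.
  + by rewrite (negbTE (eirr v)).
  + move=> /andP[wS evw]; apply: contra cN => /eqP ->.
    by apply/imsetP; exists w => //; rewrite inE wS esymm.
  + move=> /andP[uS euv]; apply: contra cN => /eqP <-.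
    by apply/imsetP; exists u => //; rewrite inE uS.
  + move=> /and3P[uS wS euw]; have := h2 u => /forallP/(_ w).
    by rewrite uS wS euw.
- apply/forallP=> w; apply/implyP; rewrite !inE ffunE negb_or => /andP[/negbTE -> wS].
  by have := h3 w; rewrite wS.
- rewrite ffunE; have -> : (q == v) = false by apply/negbTE; apply: contraNneq vS => <-.
  by [].
- rewrite ffunE; have -> : (s == v) = false by apply/negbTE; apply: contraNneq vS => <-.
  by [].
Qed.

Variable r : V -> nat.
Variable E : {set V}.
Let Q := [set q; s].
Hypothesis rinj : {in ~: Q &, injective r}.
Hypotheses (hx : x \in L q) (hy : y \in L s) (xy : x != y) (eqs : e q s).
Definition dd v := #|[set u | ((u \in Q) || (r u < r v)) && e u v]|.
Hypothesis dbound : forall v, v \notin Q -> dd v <= 2 /\ (v \notin E -> dd v <= 1).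

Definition St t := Q :|: [set u | r u < t].

Lemma cnt_step (X : {set V}) t v : X \subset ~: Q -> v \notin Q -> r v = t ->
  #|[set u in X | r u < t.+1]| = #|[set u in X | r u < t]| + (v \in X).
Proof.
move=> /subsetP XQ vQ rv.
have vQ' : v \in ~: Q by rewrite inE.
case vX: (v \in X).
  have -> : [set u in X | r u < t.+1] = v |: [set u in X | r u < t].
    apply/setP=> u; rewrite !inE ltnS leq_eqVlt.
    case: (eqVneq u v) => [-> | uv]; first by rewrite vX rv eqxx.
    case uX: (u \in X) => //=; case: eqP => //= rut.
    have uQ := XQ _ uX.
    by move: uv; rewrite (rinj uQ vQ' (etrans rut (esym rv))) eqxx.
  by rewrite cardsU1 inE vX rv ltnn /= addn1.
have -> : [set u in X | r u < t.+1] = [set u in X | r u < t]; last by rewrite addn0.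
apply/setP=> u; rewrite !inE ltnS leq_eqVlt.
case uX: (u \in X) => //=; case: eqP => //= rut.
have uQ := XQ _ uX.
have uv : u = v := rinj uQ vQ' (etrans rut (esym rv)).
by move: vX; rewrite -uv uX.
Qed.

Lemma qs_neq : q != s.
Proof. by apply: contraNneq (eirr q) => qs; rewrite {2}qs. Qed.

Lemma base : 0 < #|AS Q|.
Proof.
apply/card_gt0P; exists [ffun w => if w == q then x else if w == s then y else c0].
have sq : (s == q) = false by rewrite eq_sym; apply/negbTE; exact: qs_neq.
rewrite inE; apply/and5P; split.
- apply/forallP=> w; apply/implyP; rewrite !inE ffunE.
  by case/orP=> /eqP ->; rewrite ?eqxx ?sq.
- apply/forallP=> u; apply/forallP=> w; apply/implyP; rewrite !inE !ffunE.
  case/and3P=> /orP[] /eqP -> /orP[] /eqP ->; rewrite ?eqxx ?sq ?(negbTE (eirr _)) //.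
  by rewrite eq_sym.
- apply/forallP=> w; apply/implyP; rewrite !inE ffunE negb_or => /andP[/negbTE -> /negbTE ->].
  by [].
- by rewrite ffunE eqxx.
- by rewrite ffunE sq eqxx.
Qed.

Lemma greedy_t t : m.-1 ^ #|[set u in ~: (Q :|: E) | r u < t]| *
   (m - 2) ^ #|[set u in E :\: Q | r u < t]| <= #|AS (St t)|.
Proof.
have sub1 : ~: (Q :|: E) \subset ~: Q by apply/subsetP=> u; rewrite !inE negb_or => /andP[].
have sub2 : E :\: Q \subset ~: Q by apply/subsetP=> u; rewrite !inE => /andP[].
elim: t => [|t IH].
  have -> : St 0 = Q by apply/setP=> u; rewrite !inE orbF.
  have e0 : forall X : {set V}, [set u in X | r u < 0] = set0 by move=> X; apply/setP=> u; rewrite !inE andbF.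
  by rewrite !e0 !cards0 muln1; exact: base.
case: (pickP (fun v => (v \notin Q) && (r v == t))) => [v /andP[vQ /eqP rv] | none].
  have vSt : v \notin St t by rewrite !inE negb_or -!in_set2 vQ rv ltnn.
  have -> : St t.+1 = v |: St t.
    apply/setP=> u; rewrite !inE ltnS leq_eqVlt.
    case: (eqVneq u v) => [->|uv]; first by rewrite rv eqxx !orbT.
    case: (r u =P t) => [rut|_]; last by [].
    rewrite orbT /=; case uQ: ((u == q) || (u == s)) => //=.
    have uQ' : u \in ~: Q by rewrite !inE uQ.
    have vQ' : v \in ~: Q by rewrite inE.
    by move: uv; rewrite (rinj uQ' vQ' (etrans rut (esym rv))) eqxx.
  have qS : q \in St t by rewrite !inE eqxx.
  have sS : s \in St t by rewrite !inE eqxx orbT.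
  apply: leq_trans (step qS sS vSt).
  have -> : [set u in St t | e u v] = [set u | ((u \in Q) || (r u < r v)) && e u v].
    by apply/setP=> u; rewrite !inE rv.
  rewrite (cnt_step sub1 vQ rv) (cnt_step sub2 vQ rv).
  have [d2 d1] := dbound vQ.
  have vQ2 : (v \in Q) = false by apply/negbTE.
  rewrite -/(dd v) in_setC in_setU in_setD vQ2 /=.
  set a := #|[set u in ~: (Q :|: E) | r u < t]|.
  set b := #|[set u in E :\: Q | r u < t]|.
  case vE: (v \in E) => /=.
    rewrite addn0 addn1 expnS mulnCA mulnC leq_mul //.
    by rewrite leq_sub2l.
  rewrite addn0 addn1 expnS -mulnA mulnC leq_mul //.
  by rewrite -subn1 leq_sub2l // d1 // vE.
have -> : St t.+1 = St t.
  apply/setP=> u; rewrite !inE ltnS leq_eqVlt.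
  case: (r u =P t) => [rut|_]; last by [].
  have := none u; rewrite /= rut eqxx andbT => /negbFE.
  by rewrite !inE => ->.
have e1 : forall X : {set V}, X \subset ~: Q -> [set u in X | r u < t.+1] = [set u in X | r u < t].
  move=> X /subsetP XQ; apply/setP=> u; rewrite !inE ltnS leq_eqVlt.
  case uX: (u \in X) => //=; case: eqP => //= rut.
  have := none u; rewrite /= rut eqxx andbT => /negbFE uQ.
  by have := XQ _ uX; rewrite inE uQ.
by rewrite !e1.
Qed.

Lemma greedy_final : m.-1 ^ #|~: (Q :|: E)| * (m - 2) ^ #|E :\: Q| <=
  #|[set f : {ffun V -> C} | proper_L_coloring e L f && (f q == x) && (f s == y)]|.
Proof.
set T := (\max_u r u).+1.
have hT : forall u, r u < T by move=> u; rewrite ltnS; exact: leq_bigmax.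
have eT : forall X : {set V}, [set u in X | r u < T] = X by move=> X; apply/setP=> u; rewrite !inE hT andbT.
have := greedy_t T; rewrite !eT => /leq_trans; apply.
apply: subset_leq_card; apply/subsetP=> f; rewrite !inE => /and5P[/forallP h1 /forallP h2 _ -> ->].
rewrite !andbT; apply/andP; split.
  by apply/forallP=> v; have := h1 v; rewrite !inE hT orbT.
apply/forallP=> u; apply/forallP=> v; apply/implyP=> euv.
by have := h2 u => /forallP/(_ v); rewrite !inE !hT !orbT euv.
Qed.
End Greedy.

Lemma zipP (s : seq nat) a b : (a, b) \in zip s (behead s) ->
  exists i, i.+1 < size s /\ a = nth 0 s i /\ b = nth 0 s i.+1.
Proof.
elim: s => [|z [|w s] IH] //=.
rewrite inE => /orP[/eqP [-> ->]|H]; first by exists 0.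
have [i [hi [ha hb]]] := IH H.
by exists i.+1; split.
Qed.

Lemma nth_tp o l i : 0 < l -> i <= l ->
  nth 0 (theta_path o l) i = if i == 0 then 0 else if i < l then o + i.-1 else 1.
Proof.
move=> l0 il; rewrite /theta_path; case: i il => [|i] il //=.
rewrite nth_rcons size_iota.
have -> : (i < l.-1) = (i.+1 < l) by lia.
case: ifP => h; first by rewrite nth_iota; lia.
have -> : i == l.-1 by lia.
by [].
Qed.

Lemma size_tp o l : 0 < l -> size (theta_path o l) = l.+1.
Proof. by move=> l0; rewrite /theta_path /= size_rcons size_iota; lia. Qed.

Ltac splitifs := repeat match goal with
 | |- context [if ?b then _ else _] => let H := fresh "H" in case: (boolP b) => H
 | H : context [if ?b then _ else _] |- _ => let H' := fresh "H" in revert H; case: (boolP b) => H' H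
 end.

Lemma cnt3 (p : pred nat) a b c : count p [:: a; b; c] = p a + (p b + (p c + 0)). Proof. by []. Qed.
Lemma cnt2 (p : pred nat) a b : count p [:: a; b] = p a + (p b + 0). Proof. by []. Qed.

Section Theta.
Variables l1 l2 l3 : nat.
Hypotheses (h1 : 0 < l1) (h2 : 1 < l2) (h3 : 1 < l3).

Definition N := (l1 + l2 + l3).-1.
Definition ll k := if k == 1 then l1 else if k == 2 then l2 else l3.
Definition oo k := if k == 1 then 2 else if k == 2 then 2 + l1.-1 else 2 + l1.-1 + l2.-1.
Definition P k i := if i == 0 then 0 else if i < ll k then oo k + i.-1 else 1.
Definition pathof v := if v < oo 2 then 1 else if v < oo 3 then 2 else 3.
Definition pos v := v - oo (pathof v) + 1.
Definition K k := (k == 1) || (k == 2) || (k == 3).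

Ltac kcase hk := case/orP: hk => [/orP[]|] /eqP ->.
Ltac crush := unfold N, pos, pathof, P, ll, oo in *; simpl in *; splitifs; lia.

Lemma ll_gt0 k : 0 < ll k.
Proof. rewrite /ll; splitifs; lia. Qed.

Lemma P_lt k i : K k -> i <= ll k -> P k i < N.
Proof. move=> hk; kcase hk; crush. Qed.

Lemma P_int k i : K k -> 0 < i < ll k -> [/\ 2 <= P k i, pathof (P k i) = k & pos (P k i) = i].
Proof. move=> hk; kcase hk => hi; split; crush. Qed.

Lemma v_int v : 2 <= v < N -> [/\ K (pathof v), 0 < pos v < ll (pathof v) & P (pathof v) (pos v) = v].
Proof.
move=> hv; rewrite /pos /pathof.
case: ifP => [c1|c2]; last case: ifP => [c3|c4]; rewrite /K /=; split => //;
 [move: hv c1 | move: hv c1 | move: hv c2 c3 | move: hv c2 c3 | move: hv c2 c4 | move: hv c2 c4];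
 rewrite /N /P /ll /oo /=; splitifs; lia.
Qed.

Lemma P_inj k i i' : K k -> i <= ll k -> i' <= ll k -> P k i = P k i' -> i = i'.
Proof. move=> hk; kcase hk; crush. Qed.

Lemma nthP k i : i <= ll k -> nth 0 (theta_path (oo k) (ll k)) i = P k i.
Proof. by move=> hi; rewrite nth_tp // ll_gt0. Qed.

Lemma adj_char u v : theta_adj_nat l1 l2 l3 u v -> exists k i,
  [/\ K k, i < ll k & ((u = P k i /\ v = P k i.+1) \/ (u = P k i.+1 /\ v = P k i))].
Proof.
have gen : forall k, K k -> ((u,v) \in path_edges (theta_path (oo k) (ll k))) ||
   ((v,u) \in path_edges (theta_path (oo k) (ll k))) -> exists k i,
  [/\ K k, i < ll k & ((u = P k i /\ v = P k i.+1) \/ (u = P k i.+1 /\ v = P k i))].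
  move=> k hk; rewrite /path_edges => /orP[] /zipP [i [hi [ha hb]]];
    rewrite size_tp ?ll_gt0 // ltnS in hi; exists k, i; split => //.
    by left; rewrite ha hb !nthP // ltnW.
  by right; rewrite ha hb !nthP // ltnW.
rewrite /theta_adj_nat /theta_paths /= => /orP[|/orP[|/orP[]//]].
- by apply: (gen 1).
- by apply: (gen 2).
- by apply: (gen 3).
Qed.

Lemma adj_irr v : ~~ theta_adj_nat l1 l2 l3 v v.
Proof.
apply/negP => /adj_char [k [i [hk hi [[a b]|[a b]]]]];
 have := P_inj hk (ltnW hi) hi; rewrite -a b => /(_ erefl); lia.
Qed.

Lemma adj_sym u v : theta_adj_nat l1 l2 l3 u v = theta_adj_nat l1 l2 l3 v u.
Proof. by rewrite /theta_adj_nat; apply: eq_has => p; rewrite orbC. Qed.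

Definition nbr v := if v == 0 then [:: P 1 1; P 2 1; P 3 1]
  else if v == 1 then [:: P 1 (ll 1).-1; P 2 (ll 2).-1; P 3 (ll 3).-1]
  else [:: P (pathof v) (pos v).-1; P (pathof v) (pos v).+1].

Lemma nbr0 : nbr 0 = [:: P 1 1; P 2 1; P 3 1]. Proof. by []. Qed.
Lemma nbr1 : nbr 1 = [:: P 1 (ll 1).-1; P 2 (ll 2).-1; P 3 (ll 3).-1]. Proof. by []. Qed.
Lemma nbrI v : 2 <= v -> nbr v = [:: P (pathof v) (pos v).-1; P (pathof v) (pos v).+1].
Proof. by rewrite /nbr; case: v => [|[|v]]. Qed.

Lemma Pl k : P k (ll k) = 1.
Proof. by rewrite /P ltnn; case: (ll k) (ll_gt0 k). Qed.

Lemma nbr_spec u v : theta_adj_nat l1 l2 l3 u v -> u \in nbr v.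
Proof.
move=> /adj_char [k [i [hk hi [[a b]|[a b]]]]]; subst u v.
- have [i1|i1] : i.+1 < ll k \/ i.+1 = ll k by lia.
    have hh : 0 < i.+1 < ll k by rewrite i1.
    have [p2 pk pp] := P_int hk hh.
    by rewrite nbrI // pk pp /= inE eqxx.
  rewrite i1 Pl nbr1.
  have -> : i = (ll k).-1 by rewrite -i1.
  by move: hk; rewrite /K => /orP[/orP[]|] /eqP ->; rewrite !inE eqxx ?orbT.
- case: (posnP i) => [->|i0].
    have -> : P k 0 = 0 by [].
    by rewrite nbr0; move: hk; rewrite /K => /orP[/orP[]|] /eqP ->; rewrite !inE eqxx ?orbT.
  have hh : 0 < i < ll k by rewrite i0 hi.
  have [p2 pk pp] := P_int hk hh.
  by rewrite nbrI // pk pp /= !inE eqxx orbT.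
Qed.


Lemma llN k : K k -> ll k < N.
Proof. move=> hk; kcase hk; crush. Qed.

Lemma N4 : 4 <= N.
Proof. rewrite /N; lia. Qed.

Lemma Psucc k i : K k -> 0 < i -> i.+1 < ll k -> P k i.+1 = (P k i).+1.
Proof. move=> hk i0 hi; rewrite /P /=; have -> : i == 0 = false by lia.
have -> : i < ll k by lia. by rewrite hi; lia. Qed.

Lemma notQ k k' i i0 : K k -> K k' -> k' != k -> 0 < i < ll k' -> i0 <= ll k -> P k' i != P k i0.
Proof.
move=> hk hk' kk hi hi0; have [p2 pk pp] := P_int hk' hi.
case: (posnP i0) => [->|i00]; first by have -> : P k 0 = 0 by []; lia.
case: (ltngtP i0 (ll k)) => [i1|i1|i1]; first last.
- by rewrite i1 Pl; lia.
- lia.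
have hh : 0 < i0 < ll k by rewrite i00 i1.
have [_ pk' _] := P_int hk hh.
by apply/eqP => e; move: kk; rewrite -pk' -e pk eqxx.
Qed.

Section Rank.
Variables k j : nat.
Hypotheses (hk : K k) (hj : j < ll k).

Definition R v := if v == 0 then 2 * ll k else if v == 1 then ll k
  else if pathof v == k then (if j < pos v then pos v else 2 * ll k - pos v) else 2 * N + v.

Lemma R_P i : i <= ll k -> R (P k i) = if j < i then i else 2 * ll k - i.
Proof.
move=> hi; case: (posnP i) => [->|i0]; first by rewrite /R /=; lia.
case: (ltngtP i (ll k)) => [i1|i1|i1]; first last.
- rewrite i1 Pl /R /=; have -> : j < ll k by []. by [].
- lia.
have hh : 0 < i < ll k by rewrite i0 i1.
have [p2 pk pp] := P_int hk hh.
rewrite /R; have -> : (P k i == 0) = false by lia.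
have -> : (P k i == 1) = false by lia.
by rewrite pk eqxx pp.
Qed.

Lemma R_oth k' i : K k' -> k' != k -> 0 < i < ll k' -> R (P k' i) = 2 * N + P k' i.
Proof.
move=> hk' kk hi; have [p2 pk pp] := P_int hk' hi.
rewrite /R; have -> : (P k' i == 0) = false by lia.
have -> : (P k' i == 1) = false by lia.
by rewrite pk (negbTE kk).
Qed.

Lemma rep w : w < N -> (exists2 i, i <= ll k & w = P k i) \/
  (exists k' i, [/\ K k', k' != k, 0 < i < ll k' & w = P k' i]).
Proof.
move=> wN; case: (posnP w) => [->|w0]; first by left; exists 0.
case: (eqVneq w 1) => [->|w1]; first by left; exists (ll k); rewrite ?Pl.
have hw : 2 <= w < N by rewrite wN; lia.
have [hk' hi hp] := v_int hw.
case: (eqVneq (pathof w) k) => [e|ne].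
  left; exists (pos w); rewrite -e; last by rewrite hp.
  by case/andP: hi => _ /ltnW.
by right; exists (pathof w), (pos w); split.
Qed.

Lemma Rinj u v : u < N -> v < N -> R u = R v -> u = v.
Proof.
have lk := llN hk.
move=> /rep [[i hi ->]|[k' [i [hk' kk hi ->]]]] /rep [[i' hi' ->]|[k'' [i' [hk'' kk' hi' ->]]]].
- rewrite !R_P // => e; have : i = i' by move: e; splitifs; lia.
  by move=> ->.
- rewrite R_P // R_oth //; splitifs; lia.
- rewrite R_P // R_oth //; splitifs; lia.
- by rewrite !R_oth //; lia.
Qed.

Definition Prd v w := (w == P k j) || (w == P k j.+1) || (R w < R v).
Definition k1 := if k == 1 then 2 else 1.
Definition k2 := if k == 3 then 2 else 3.
Definition e1 := if ll k1 == 1 then (if j == 0 then 1 else 0) else P k1 (ll k1).-1.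
Definition e2 := P k2 (ll k2).-1.

Lemma oth_false v k' i : K k' -> k' != k -> 0 < i < ll k' -> R v <= 2 * N + P k' i ->
  Prd v (P k' i) = false.
Proof.
move=> hk' kk hi hR; rewrite /Prd (negbTE (notQ hk hk' kk hi (ltnW hj))).
rewrite (negbTE (notQ hk hk' kk hi hj)) R_oth //; lia.
Qed.

Lemma dbound_nat v : v < N -> v != P k j -> v != P k j.+1 ->
  count (Prd v) (nbr v) <= 2 /\ (v != e1 -> v != e2 -> count (Prd v) (nbr v) <= 1).
Proof.
move=> vN vj vj1.
have lk := llN hk.
have P0 : forall k', P k' 0 = 0 by [].
have PQ0 : forall i, i <= ll k -> (P k i == 0) = (i == 0).
  move=> i hi; apply/eqP/eqP => [e|->//]; apply: (P_inj hk hi (leq0n _)); by rewrite e.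
have Pl1 : forall k', P k' (ll k') = 1 by move=> k'; rewrite Pl.
case: (posnP v) => [v0|v0].
  subst v.
  have j0 : j != 0 by apply: contraNneq vj => ->.
  have F : forall k', K k' -> k' != k -> 1 < ll k' -> Prd 0 (P k' 1) = false.
    move=> k' hk' kk l'; apply: oth_false => //; try lia.
    by rewrite /R /=; lia.
  rewrite nbr0 cnt3.
  case/orP: (hk) => [/orP[]|] /eqP ek.
  - rewrite (F 2) ?(F 3) ?ek //.
    by split; [|move=> _ _]; case: (Prd 0 (P 1 1)).
  - rewrite (F 3) ?ek //; split; first by case: (Prd 0 (P 1 1)); case: (Prd 0 (P 2 1)).
    move=> ne1 _; have l1' : 1 < ll 1.
      move: ne1; rewrite /e1 /k1 ek /=; case: ifP => [/eqP ->|]; rewrite ?(negbTE j0) //.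
      by rewrite /ll /=; lia.
    by rewrite (F 1) ?ek //; case: (Prd 0 (P 2 1)).
  - rewrite (F 2) ?ek //; split; first by case: (Prd 0 (P 1 1)); case: (Prd 0 (P 3 1)).
    move=> ne1 _; have l1' : 1 < ll 1.
      move: ne1; rewrite /e1 /k1 ek /=; case: ifP => [/eqP ->|]; rewrite ?(negbTE j0) //.
      by rewrite /ll /=; lia.
    by rewrite (F 1) ?ek //; case: (Prd 0 (P 3 1)).
case: (eqVneq v 1) => [v1|v1].
  subst v.
  have j1 : j.+1 != ll k by apply: contraNneq vj1 => ->; rewrite Pl.
  have F : forall k', K k' -> k' != k -> 1 < ll k' -> Prd 1 (P k' (ll k').-1) = false.
    move=> k' hk' kk l'; apply: oth_false => //; try lia.
    by rewrite /R /=; lia.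
  have G : j != 0 -> Prd 1 0 = false.
    move=> j0; rewrite /Prd eq_sym PQ0 ?(ltnW hj) // (negbTE j0) eq_sym PQ0 //.
    by rewrite /R /=; lia.
  rewrite nbr1 cnt3.
  case/orP: (hk) => [/orP[]|] /eqP ek.
  - rewrite (F 2) ?(F 3) ?ek //.
    by split; [|move=> _ _]; case: (Prd 1 _).
  - rewrite (F 3) ?ek //; split; first by case: (Prd 1 (P 1 _)); case: (Prd 1 (P 2 _)).
    move=> ne1 _; case: (ltnP 1 (ll 1)) => l1'; first by rewrite (F 1) ?ek //; case: (Prd 1 (P 2 _)).
    have ll1 : ll 1 = 1 by move: (ll_gt0 1); lia.
    have j0 : j != 0 by move: ne1; rewrite /e1 /k1 ek /= ll1 eqxx; case: (j == 0).
    by rewrite ll1 /= P0 G //; case: (Prd 1 (P 2 _)).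
  - rewrite (F 2) ?ek //; split; first by case: (Prd 1 (P 1 _)); case: (Prd 1 (P 3 _)).
    move=> ne1 _; case: (ltnP 1 (ll 1)) => l1'; first by rewrite (F 1) ?ek //; case: (Prd 1 (P 3 _)).
    have ll1 : ll 1 = 1 by move: (ll_gt0 1); lia.
    have j0 : j != 0 by move: ne1; rewrite /e1 /k1 ek /= ll1 eqxx; case: (j == 0).
    by rewrite ll1 /= P0 G //; case: (Prd 1 (P 3 _)).
have hv : 2 <= v < N by rewrite vN; lia.
have [hk' hi hp] := v_int hv.
rewrite nbrI; last by lia.
set k' := pathof v in hk' hi hp *; set i := pos v in hi hp *.
rewrite cnt2.
have b2 : forall a b : bool, a + (b + 0) <= 2 by case; case.
split; first exact: b2.
case: (eqVneq k' k) => [ek|kk].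
  have hi' : 0 < i < ll k by rewrite -ek.
  have ij : i != j by apply: contraNneq vj => <-; rewrite -hp ek.
  have ij1 : i != j.+1 by apply: contraNneq vj1 => <-; rewrite -hp ek.
  have Rv : R v = if j < i then i else 2 * ll k - i by rewrite -hp ek R_P // ltnW //; case/andP: hi'.
  move=> _ _; rewrite ek.
  case: (ltnP j i) => ji.
    have -> : Prd v (P k i.+1) = false.
      have il : i.+1 <= ll k by case/andP: hi'.
      rewrite /Prd R_P //.
      have -> : (P k i.+1 == P k j) = false.
        by apply/negbTE/eqP => /(P_inj hk il (ltnW hj)); lia.
      have -> : (P k i.+1 == P k j.+1) = false.
        by apply/negbTE/eqP => /(P_inj hk il hj); lia.
      by rewrite Rv ji; case: ifP => //; lia.
    by case: (Prd v _).
  have -> : Prd v (P k i.-1) = false.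
    have il : i.-1 <= ll k by lia.
    rewrite /Prd R_P //.
    have -> : (P k i.-1 == P k j) = false.
      by apply/negbTE/eqP => /(P_inj hk il (ltnW hj)); lia.
    have -> : (P k i.-1 == P k j.+1) = false.
      by apply/negbTE/eqP => /(P_inj hk il hj); lia.
    rewrite Rv; case: ifP; case: ifP; lia.
  by rewrite addn0; case: (Prd v _).
move=> ne1 ne2.
case: (ltnP i.+1 (ll k')) => il.
  have hi2 : 0 < i.+1 < ll k' by rewrite il.
  rewrite (@oth_false v k' i.+1) //; first by rewrite addn0; case: (Prd v _).
  rewrite -hp R_oth // Psucc //; [lia | by case/andP: hi].
have ie : i = (ll k').-1 by case/andP: hi => _; lia.
exfalso.
have k'k : (k' == k1) || (k' == k2).
  move: hk hk' kk; rewrite /K /k1 /k2; case/orP=> [/orP[]|] /eqP ->; case/orP=> [/orP[]|] /eqP ->; by [].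
case/orP: k'k => /eqP ek.
  move: ne1; rewrite /e1 -ek; have -> : ll k' == 1 = false by case/andP: hi; lia.
  by rewrite -ie hp eqxx.
by move: ne2; rewrite /e2 -ek -ie hp eqxx.
Qed.

End Rank.
End Theta.

Lemma arith m n a b : 3 <= m -> 4 <= n -> a <= 2 -> n - 2 - a <= b ->
  m.-1 ^ (n - 4) * (m - 2) ^ 2 <= m.-1 ^ b * (m - 2) ^ a.
Proof.
move=> m3 n4 a2 hb.
rewrite (_ : b = (n-4) + (b - (n-4))); last lia.
rewrite expnD -mulnA leq_mul2l; apply/orP; right.
have hY : m.-1 ^ (2 - a) <= m.-1 ^ (b - (n-4)) by apply: leq_pexp2l; lia.
move: hY; set Y := m.-1 ^ (b - (n-4)).
case: a a2 hb => [|[|[|]]] //= _ _; rewrite ?expnS ?expn0 => hY; nia.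
Qed.

Lemma card_le_count n (A : {set 'I_n}) (p : pred nat) (s : seq nat) :
  (forall u, u \in A -> (val u \in s) && p (val u)) -> #|A| <= count p s.
Proof.
move=> H; rewrite cardE -size_filter -(size_map val).
apply: uniq_leq_size; first by rewrite map_inj_uniq ?enum_uniq //; exact: val_inj.
move=> w /mapP[u]; rewrite mem_enum => /H /andP[us pu] ->.
by rewrite mem_filter pu us.
Qed.

Section Main.
Variables l1 l2 l3 : nat.
Hypotheses (h1 : 0 < l1) (h2 : 1 < l2) (h3 : 1 < l3).

Lemma main (m : nat) (C : finType)
  (L : 'I_(theta_nv l1 l2 l3) -> {set C})
  (q s : 'I_(theta_nv l1 l2 l3)) (x y : C) :
  3 <= m -> (forall v, #|L v| = m) ->
  theta_adj q s -> x \in L q -> y \in L s -> x != y ->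
  (m.-1 ^ (l1 + l2 + l3 - 5) * (m - 2) ^ 2 <=
   #|[set f : {ffun 'I_(theta_nv l1 l2 l3) -> C} |
       proper_L_coloring (@theta_adj l1 l2 l3) L f && (f q == x) && (f s == y)]|)%N.
Proof.
move=> m3 HL adj hx hy xy.
have [k [j [hk hj hqs]]] := adj_char h1 h2 h3 adj.
pose r := fun u : 'I_(theta_nv l1 l2 l3) => R l1 l2 l3 k j (val u).
pose E := [set u : 'I_(theta_nv l1 l2 l3) | (val u == e1 l1 l2 l3 k j) || (val u == e2 l1 l2 l3 k)].
have Qv : forall u : 'I_(theta_nv l1 l2 l3), (u \in [set q; s]) = (val u == P l1 l2 l3 k j) || (val u == P l1 l2 l3 k j.+1).
  move=> u; rewrite !inE -!val_eqE.
  by case: hqs => [[-> ->]|[-> ->]]; rewrite // orbC.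
have esymm : forall u v : 'I_(theta_nv l1 l2 l3), theta_adj u v = theta_adj v u.
  by move=> u v; rewrite /theta_adj adj_sym.
have eirr : forall v : 'I_(theta_nv l1 l2 l3), ~~ theta_adj v v.
  by move=> v; rewrite /theta_adj adj_irr.
have rinj : {in ~: [set q; s] &, injective r}.
  move=> u v _ _ e; apply: val_inj; exact: (Rinj h1 h2 h3 hk hj (ltn_ord u) (ltn_ord v) e).
have db : forall v, v \notin [set q; s] ->
    dd theta_adj q s r v <= 2 /\ (v \notin E -> dd theta_adj q s r v <= 1).
  move=> v; rewrite Qv negb_or => /andP[n1 n2].
  have [b2 b1] := dbound_nat h1 h2 h3 hk hj (ltn_ord v) n1 n2.
  have le : dd theta_adj q s r v <= count (Prd l1 l2 l3 k j (val v)) (nbr l1 l2 l3 (val v)).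
    apply: card_le_count => u; rewrite inE Qv => /andP[pu auv].
    rewrite (nbr_spec h1 h2 h3 auv) /=.
    by rewrite /Prd.
  split; first exact: leq_trans le b2.
  rewrite inE negb_or => /andP[ne1 ne2]; exact: leq_trans le (b1 ne1 ne2).
have := greedy_final HL esymm eirr x rinj hx hy xy adj db.
apply: leq_trans.
have n4 := N4 h1 h2 h3.
rewrite (_ : l1 + l2 + l3 - 5 = (theta_nv l1 l2 l3) - 4); last by rewrite /theta_nv; lia.
have cE : #|E :\: [set q; s]| <= 2.
  apply: (leq_trans (subset_leq_card (subsetDl _ _))).
  have -> : 2 = count predT [:: e1 l1 l2 l3 k j; e2 l1 l2 l3 k] by [].
  by apply: card_le_count => u; rewrite inE !in_cons in_nil orbF andbT.
apply: arith => //.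
have hU : [set q; s] :|: E = [set q; s] :|: (E :\: [set q; s]).
  by apply/setP=> u; rewrite !inE; case: (u == q); case: (u == s); case: (u \in E).
have c1 := cardsC ([set q; s] :|: E).
rewrite card_ord in c1.
have c2 : #|[set q; s] :|: E| <= 2 + #|E :\: [set q; s]|.
  rewrite hU cardsU cards2; apply: (leq_trans (leq_subr _ _)).
  by rewrite leq_add2r; case: (q != s).
lia.
Qed.
End Main.

Theorem lemma2p3 (l1 l2 l3 m : nat) (C : finType)
  (L : 'I_(theta_nv l1 l2 l3) -> {set C})
  (q s : 'I_(theta_nv l1 l2 l3)) (x y : C) :
  0 < l1 -> l1 <= l2 -> l1 <= l3 -> 2 <= l2 -> 2 <= l3 ->
  3 <= m -> (forall v, #|L v| = m) ->
  theta_adj q s -> x \in L q -> y \in L s -> x != y ->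
  (m.-1 ^ (l1 + l2 + l3 - 5) * (m - 2) ^ 2 <=
   #|[set f : {ffun 'I_(theta_nv l1 l2 l3) -> C} |
       proper_L_coloring (@theta_adj l1 l2 l3) L f && (f q == x) && (f s == y)]|)%N.
Proof.
move=> h1 _ _ h2 h3; exact: main.
Qed.
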